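(* Let $(\mu_z^\varepsilon)$ be a random walk on $\mathcal G$ of the form $\mu_z^\varepsilon=\delta_z+\varepsilon\mu_z$ for $\varepsilon\in[0,1]$, where each $\mu_z$ is a signed measure on $V$ of total mass zero with finite first moment. Then for every pair of distinct vertices $x,y$ the limit ${}^{\mathcal O}\mathrm{Ric}(x,y)=\lim_{\varepsilon\downarrow0}\varepsilon^{-1}\,{}^{\mathcal O}\mathrm{Ric}_\varepsilon(x,y)$ exists.
   Context: $\mathcal G$ is a locally finite graph with vertex set $V$, $\mathrm d$ a distance on $V$ with $(V,\mathrm d)$ complete. A random walk is a family of probability measures $\mu_z^\varepsilon$ on $V$ ($z\in V$, $\varepsilon\in[0,1]$) with finite first moments, continuous in $\varepsilon$, $\mu_z^0=\delta_z$ (so here $\delta_z+\varepsilon\mu_z$ is assumed to be a probability measure for each $\varepsilon\in[0,1]$). ${}^{\mathcal O}\mathrm{Ric}_\varepsilon(x,y):=1-\mathcal W_1(\mu_x^\varepsilon,\mu_y^\varepsilon)/\mathrm d(x,y)$, with $\mathcal W_1$ the $L^1$-Wasserstein distance w.r.t. $\mathrm d$. *)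

(* Defs.v *)
From HB Require Import structures.
From mathcomp Require Import all_boot all_order all_algebra.
From mathcomp Require Import all_classical all_reals all_analysis.
Set Implicit Arguments. Unset Strict Implicit. Unset Printing Implicit Defensive.
Import Order.TTheory GRing.Theory Num.Theory.
Local Open Scope classical_set_scope.
Local Open Scope ring_scope.

Section Defs.
Context {R : realType} {V : choiceType}.

Definition is_distance (d : V -> V -> R) : Prop :=
  (forall x y, 0 <= d x y) /\ (forall x y, d x y = 0 <-> x = y) /\
  (forall x y, d x y = d y x) /\ (forall x y z, d x z <= d x y + d y z).

Definition complete_distance (d : V -> V -> R) : Prop :=
  forall u : nat -> V,
    (forall e : R, 0 < e -> exists N, forall m n, (N <= m)%N -> (N <= n)%N -> d (u m) (u n) < e) ->
    exists l, forall e : R, 0 < e -> exists N, forall n, (N <= n)%N -> d (u n) l < e.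

Definition locally_finite_graph (E : V -> V -> Prop) : Prop :=
  (forall x y, E x y -> E y x) /\ (forall x, ~ E x x) /\
  (forall x, finite_set [set y | E x y]).

(* a (discrete) measure on V is given by its point masses m v = m({v}) *)
Definition abs_summable (m : V -> R) : Prop :=
  (\esum_(v in [set: V]) (`|m v|)%:E < +oo)%E.

Definition total_mass (m : V -> R) : R :=
  fine (\esum_(v in [set: V]) (Num.max (m v) 0)%:E)
  - fine (\esum_(v in [set: V]) (Num.max (- m v) 0)%:E).

Definition finite_first_moment (d : V -> V -> R) (z : V) (m : V -> R) : Prop :=
  (\esum_(v in [set: V]) (`|m v| * d z v)%:E < +oo)%E.

Definition is_prob (p : V -> R) : Prop :=
  (forall v, 0 <= p v) /\ (\esum_(v in [set: V]) (p v)%:E = 1%E).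

Definition coupling (p q : V -> R) (pi : V * V -> R) : Prop :=
  (forall w, 0 <= pi w) /\
  (forall u, \esum_(v in [set: V]) (pi (u, v))%:E = (p u)%:E) /\
  (forall v, \esum_(u in [set: V]) (pi (u, v))%:E = (q v)%:E).

Definition W1 (d : V -> V -> R) (p q : V -> R) : \bar R :=
  ereal_inf [set \esum_(w in [set: V * V]) (pi w * d w.1 w.2)%:E
            | pi in [set pi | coupling p q pi]].

Definition dirac_pt (z : V) : V -> R := fun v => if v == z then 1 else 0.

Definition walk (mu : V -> V -> R) (eps : R) (z : V) : V -> R :=
  fun v => dirac_pt z v + eps * mu z v.

Definition ORic_eps (d : V -> V -> R) (mu : V -> V -> R) (eps : R) (x y : V) : R :=
  1 - fine (W1 d (walk mu eps x) (walk mu eps y)) / d x y.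

End Defs.

(* Main.v *)
Require Import Defs.
From HB Require Import structures.
From mathcomp Require Import all_boot all_order all_algebra.
From mathcomp Require Import all_classical all_reals all_analysis.
From mathcomp Require Import lra ring.
Set Implicit Arguments. Unset Strict Implicit. Unset Printing Implicit Defensive.
Import Order.TTheory GRing.Theory Num.Theory.
Local Open Scope classical_set_scope.
Local Open Scope ring_scope.
Section HH.
Context {R : realType} {T : choiceType}.

Lemma esumZr (S : set T) (c : R) (a : T -> R) : 0 <= c -> (forall i, 0 <= a i) ->
  \esum_(i in S) (c * a i)%:E = (c%:E * \esum_(i in S) (a i)%:E)%E.
Proof.
move=> c0 a0; have [c_gt0|] := ltP 0 c; last first.
  move=> cle; have -> : c = 0 by apply/eqP; rewrite eq_le cle c0.
  by rewrite mul0e esum1// => i _; rewrite mul0r.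
rewrite /esum -ereal_sup_pZl// image_comp; congr ereal_sup.
apply: eq_imagel => A [finA _] /=.
rewrite !fsbig_finite//= ge0_sume_distrr//.
by move=> i _; rewrite lee_fin.
Qed.

Lemma esum_pt (z : T) (c : R) : 0 <= c ->
  \esum_(i in [set: T]) (if i == z then c else 0)%:E = c%:E.
Proof.
move=> c0.
have := @esum_set1 R T z (fun i => (if i == z then c else 0)%:E).
rewrite /= eqxx lee_fin => /(_ c0) <-.
rewrite [RHS]esum_mkcond; apply: eq_esum => i _.
case: eqP => [->|]; first by rewrite mem_set.
by move=> h; case: ifPn => //; rewrite inE => h2; exfalso; apply: h; exact: h2.
Qed.

Lemma esum_swap (a : T -> T -> \bar R) : (forall i j, (0 <= a i j)%E) ->
  \esum_(i in [set: T]) \esum_(j in [set: T]) a i j =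
  \esum_(k in [set: T * T]) a k.1 k.2.
Proof.
move=> a0; rewrite esum_esum//; congr esum; apply/seteqP; split => //.
Qed.

Lemma esum_swap2 (a : T -> T -> \bar R) : (forall i j, (0 <= a i j)%E) ->
  \esum_(j in [set: T]) \esum_(i in [set: T]) a i j =
  \esum_(k in [set: T * T]) a k.1 k.2.
Proof.
move=> a0; rewrite (@esum_swap (fun j i => a i j))//.
rewrite [RHS](@reindex_esum R (T * T)%type (T * T)%type setT setT (fun k => (k.2, k.1)) (fun k => a k.1 k.2)) //.
split.
- by move=> k.
- move=> [a1 b1] [a2 b2] _ _ /= h. by case: h => -> ->.
- move=> [u v] _. by exists (v, u).
Qed.
Lemma esum_mix (S : set T) (l : R) (a b : T -> R) : 0 <= l <= 1 ->
  (forall i, 0 <= a i) -> (forall i, 0 <= b i) ->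
  \esum_(i in S) (l * a i + (1 - l) * b i)%:E =
  (l%:E * (\esum_(i in S) (a i)%:E) + (1 - l)%:E * (\esum_(i in S) (b i)%:E))%E.
Proof.
move=> /andP[l0 l1] a0 b0.
under eq_esum do rewrite EFinD.
rewrite esumD; last 2 first.
- by move=> i _; rewrite lee_fin mulr_ge0.
- by move=> i _; rewrite lee_fin mulr_ge0// subr_ge0.
by rewrite !esumZr// subr_ge0.
Qed.
End HH.

Section Coup.
Context {R : realType} {V : choiceType}.
Implicit Types (p q : V -> R) (pi : V * V -> R).

Lemma esum_pair (f : V * V -> R) : (forall w, 0 <= f w) ->
  \esum_(w in [set: V * V]) (f w)%:E =
  \esum_(u in [set: V]) \esum_(v in [set: V]) (f (u, v))%:E.
Proof.
move=> f0; rewrite (@esum_swap R V (fun u v => (f (u, v))%:E)); last first.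
  by move=> i j; rewrite lee_fin.
by apply: eq_esum => -[].
Qed.

Lemma esum_pair2 (f : V * V -> R) : (forall w, 0 <= f w) ->
  \esum_(w in [set: V * V]) (f w)%:E =
  \esum_(v in [set: V]) \esum_(u in [set: V]) (f (u, v))%:E.
Proof.
move=> f0; rewrite (@esum_swap2 R V (fun u v => (f (u, v))%:E)); last first.
  by move=> i j; rewrite lee_fin.
by apply: eq_esum => -[].
Qed.

End Coup.

Section Coup2.
Context {R : realType} {V : choiceType}.
Implicit Types (p q : V -> R) (pi : V * V -> R) (d : V -> V -> R).

Definition cost (d : V -> V -> R) pi : \bar R :=
  \esum_(w in [set: V * V]) (pi w * d w.1 w.2)%:E.

Lemma coupling_mix p1 q1 p2 q2 p q pi1 pi2 (l : R) : 0 <= l <= 1 ->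
  coupling p1 q1 pi1 -> coupling p2 q2 pi2 ->
  (forall u, p u = l * p1 u + (1 - l) * p2 u) ->
  (forall v, q v = l * q1 v + (1 - l) * q2 v) ->
  coupling p q (fun w => l * pi1 w + (1 - l) * pi2 w).
Proof.
move=> l01 [c10 [c11 c12]] [c20 [c21 c22]] hp hq.
have /andP[l0 l1] := l01.
split; [|split].
- by move=> w; rewrite addr_ge0// mulr_ge0// subr_ge0.
- move=> u; rewrite (@esum_mix R _ setT l (fun v => pi1 (u, v)) (fun v => pi2 (u, v)))//.
  by rewrite c11 c21 hp -!EFinM -EFinD.
- move=> v; rewrite (@esum_mix R _ setT l (fun u => pi1 (u, v)) (fun u => pi2 (u, v)))//.
  by rewrite c12 c22 hq -!EFinM -EFinD.
Qed.

Lemma cost_mix d pi1 pi2 (l : R) : 0 <= l <= 1 -> (forall x y, 0 <= d x y) ->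
  (forall w, 0 <= pi1 w) -> (forall w, 0 <= pi2 w) ->
  cost d (fun w => l * pi1 w + (1 - l) * pi2 w) =
  (l%:E * cost d pi1 + (1 - l)%:E * cost d pi2)%E.
Proof.
move=> l01 d0 p10 p20; rewrite /cost.
rewrite -(@esum_mix R _ setT l (fun w => pi1 w * d w.1 w.2) (fun w => pi2 w * d w.1 w.2))//; last 2 first.
- by move=> w; rewrite mulr_ge0.
- by move=> w; rewrite mulr_ge0.
by apply: eq_esum => w _; rewrite mulrDl !mulrA.
Qed.

Definition pt_coupling (x y : V) : V * V -> R :=
  fun w => if w == (x, y) then 1 else 0.

Lemma coupling_pt x y : coupling (dirac_pt x) (dirac_pt y) (pt_coupling x y).
Proof.
rewrite /pt_coupling /dirac_pt; split; [|split].
- by move=> w; case: ifP.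
- move=> u; have [->|hu] := eqVneq u x.
    apply: eq_trans (esum_pt y (@ler01 R)); apply: eq_esum => v _.
    by rewrite xpair_eqE eqxx.
  rewrite esum1// => v _.
  by rewrite xpair_eqE (negPf hu).
- move=> v; have [->|hv] := eqVneq v y.
    apply: eq_trans (esum_pt x (@ler01 R)); apply: eq_esum => u _.
    by rewrite xpair_eqE eqxx andbT.
  rewrite esum1// => u _.
  by rewrite xpair_eqE (negPf hv) andbF.
Qed.

Lemma cost_pt d x y : 0 <= d x y -> cost d (pt_coupling x y) = (d x y)%:E.
Proof.
move=> d0; rewrite /cost /pt_coupling -(esum_pt (x, y) d0).
apply: eq_esum => w _; case: eqP => [->|]; first by rewrite mul1r.
by rewrite mul0r.
Qed.

End Coup2.

Section Main.
Context {R : realType} {V : choiceType}.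
Implicit Types (d : V -> V -> R) (mu : V -> V -> R).

Definition Mom d mu z := fine (\esum_(v in [set: V]) (`|mu z v| * d z v)%:E).

Lemma mom_fin d mu z : finite_first_moment d z (mu z) -> (forall a b, 0 <= d a b) ->
  \esum_(v in [set: V]) (`|mu z v| * d z v)%:E = (Mom d mu z)%:E.
Proof.
move=> fm d0; rewrite /Mom fineK// ge0_fin_numE//.
by apply: esum_ge0 => v _; rewrite lee_fin mulr_ge0.
Qed.

Lemma mu_ge0 mu z u : (forall (eps : R) z, 0 <= eps <= 1 -> is_prob (walk mu eps z)) ->
  u != z -> 0 <= mu z u.
Proof.
move=> hp uz; have [h _] := hp 1 z (ltac:(by rewrite ler01 lexx)).
by have := h u; rewrite /walk /dirac_pt (negPf uz) add0r mul1r.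
Qed.

Lemma mom_walk d mu z (eps : R) : is_distance d ->
  (forall (eps : R) z, 0 <= eps <= 1 -> is_prob (walk mu eps z)) ->
  finite_first_moment d z (mu z) -> 0 <= eps <= 1 ->
  \esum_(u in [set: V]) (walk mu eps z u * d u z)%:E = (eps * Mom d mu z)%:E.
Proof.
move=> [d0 [dE [dS _]]] hp fm /andP[e0 e1].
rewrite EFinM -mom_fin// -esumZr//; last by move=> v; rewrite mulr_ge0.
apply: eq_esum => u _; congr EFin.
have [->|uz] := eqVneq u z.
  by rewrite (_ : d z z = 0) ?mulr0 ?mul0r //; apply/dE.
rewrite /walk /dirac_pt (negPf uz) add0r ger0_norm ?(mu_ge0 hp uz)// dS.
by rewrite mulrA.
Qed.


Lemma lower d mu x y (eps : R) pi : is_distance d ->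
  (forall (eps : R) z, 0 <= eps <= 1 -> is_prob (walk mu eps z)) ->
  finite_first_moment d x (mu x) -> finite_first_moment d y (mu y) ->
  0 <= eps <= 1 -> coupling (walk mu eps x) (walk mu eps y) pi ->
  ((d x y - eps * (Mom d mu x + Mom d mu y))%:E <= cost d pi)%E.
Proof.
move=> dist hp fmx fmy he [p0 [m1 m2]].
have [d0 [dE [dS dT]]] := dist.
have [px0 px1] := hp eps x he.
have h1 : \esum_(w in [set: V * V]) (pi w * d x y)%:E = (d x y)%:E.
  rewrite esum_pair; last by move=> w; rewrite mulr_ge0.
  transitivity (\esum_(u in [set: V]) (d x y * walk mu eps x u)%:E).
    apply: eq_esum => u _; rewrite EFinM -m1 -esumZr//.
    by apply: eq_esum => v _; rewrite mulrC.
  by rewrite esumZr// px1 mule1.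
have h2 : \esum_(w in [set: V * V]) (pi w * d w.1 x)%:E = (eps * Mom d mu x)%:E.
  rewrite esum_pair; last by move=> w; rewrite mulr_ge0.
  rewrite -(mom_walk dist hp fmx he); apply: eq_esum => u _ /=.
  rewrite EFinM -m1 muleC -esumZr//.
  by apply: eq_esum => v _; rewrite mulrC.
have h3 : \esum_(w in [set: V * V]) (pi w * d w.2 y)%:E = (eps * Mom d mu y)%:E.
  rewrite esum_pair2; last by move=> w; rewrite mulr_ge0.
  rewrite -(mom_walk dist hp fmy he); apply: eq_esum => v _ /=.
  rewrite EFinM -m2 muleC -esumZr//.
  by apply: eq_esum => u _; rewrite mulrC.
have h4 : (\esum_(w in [set: V * V]) (pi w * d x y)%:E <=
   \esum_(w in [set: V * V]) ((pi w * d w.1 w.2)%:E +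
      ((pi w * d w.1 x)%:E + (pi w * d w.2 y)%:E)))%E.
  apply: le_esum => -[u v] _ /=.
  rewrite -!EFinD lee_fin -!mulrDr ler_wpM2l//.
  have := dT x u y; have := dT u v y; rewrite (dS x u); lra.
rewrite esumD in h4; last 2 first.
- by move=> w _; rewrite lee_fin mulr_ge0.
- by move=> w _; rewrite adde_ge0// lee_fin mulr_ge0.
rewrite esumD in h4; last 2 first.
- by move=> w _; rewrite lee_fin mulr_ge0.
- by move=> w _; rewrite lee_fin mulr_ge0.
move: h4; rewrite h1 h2 h3 /cost.
have : (0 <= \esum_(w in [set: V * V]) (pi w * d w.1 w.2)%:E)%E.
  by apply: esum_ge0 => w _; rewrite lee_fin mulr_ge0.
case: (\esum_(w in [set: V * V]) (pi w * d w.1 w.2)%:E) => [c||] //.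
by rewrite -!EFinD !lee_fin => _; lra.
by move=> _ _; rewrite leey.
Qed.


Lemma mom_ge0 d mu z : (forall a b, 0 <= d a b) -> 0 <= Mom d mu z.
Proof.
by move=> d0; rewrite /Mom fine_ge0// esum_ge0// => v _; rewrite lee_fin mulr_ge0.
Qed.

Lemma upper d mu x y (eps : R) : is_distance d ->
  (forall (eps : R) z, 0 <= eps <= 1 -> is_prob (walk mu eps z)) ->
  finite_first_moment d x (mu x) -> finite_first_moment d y (mu y) ->
  0 <= eps <= 1 -> exists pi, coupling (walk mu eps x) (walk mu eps y) pi /\
  (cost d pi <= (d x y + eps * (Mom d mu x + Mom d mu y))%:E)%E.
Proof.
move=> dist hp fmx fmy he.
have [d0 [dE [dS dT]]] := dist.
have [px0 px1] := hp eps x he.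
have [py0 py1] := hp eps y he.
set p := walk mu eps x in px0 px1 *; set q := walk mu eps y in py0 py1 *.
have /andP[e0 e1] := he.
exists (fun w => p w.1 * q w.2); split.
  split; [by move=> w; rewrite mulr_ge0| split].
  - by move=> u /=; rewrite esumZr// py1 mule1.
  - move=> v /=; under eq_esum do rewrite mulrC.
    by rewrite esumZr// px1 mule1.
rewrite /cost.
apply: (@le_trans _ _ (\esum_(w in [set: V * V]) ((p w.1 * d w.1 x * q w.2)%:E +
   ((d x y * p w.1 * q w.2)%:E + (p w.1 * (q w.2 * d w.2 y))%:E)))%E).
  apply: le_esum => -[u v] _ /=.
  rewrite -!EFinD lee_fin.
  apply: (@le_trans _ _ (p u * q v * (d u x + d x y + d v y))).
    rewrite ler_wpM2l ?mulr_ge0//.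
    have := dT u x v; have := dT x y v; rewrite (dS v y); lra.
  by rewrite le_eqVlt; apply/orP; left; apply/eqP; ring.
rewrite esumD; last 2 first.
- by move=> w _; rewrite lee_fin !mulr_ge0.
- by move=> w _; rewrite adde_ge0// lee_fin !mulr_ge0.
rewrite esumD; last 2 first.
- by move=> w _; rewrite lee_fin !mulr_ge0.
- by move=> w _; rewrite lee_fin !mulr_ge0.
have hA : \esum_(w in [set: V * V]) (p w.1 * d w.1 x * q w.2)%:E = (eps * Mom d mu x)%:E.
  rewrite esum_pair; last by move=> w; rewrite !mulr_ge0.
  rewrite -(mom_walk dist hp fmx he); apply: eq_esum => u _ /=.
  by rewrite esumZr ?mulr_ge0// py1 mule1.
have hB : \esum_(w in [set: V * V]) (d x y * p w.1 * q w.2)%:E = (d x y)%:E.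
  rewrite esum_pair; last by move=> w; rewrite !mulr_ge0.
  transitivity (\esum_(u in [set: V]) (d x y * p u)%:E).
    by apply: eq_esum => u _ /=; rewrite esumZr ?mulr_ge0// py1 mule1.
  by rewrite esumZr// px1 mule1.
have hC : \esum_(w in [set: V * V]) (p w.1 * (q w.2 * d w.2 y))%:E = (eps * Mom d mu y)%:E.
  rewrite esum_pair; last by move=> w; rewrite !mulr_ge0.
  transitivity (\esum_(u in [set: V]) (eps * Mom d mu y * p u)%:E).
    apply: eq_esum => u _ /=; rewrite esumZr//; last by move=> v; rewrite mulr_ge0.
    by rewrite (mom_walk dist hp fmy he) -EFinM mulrC.
  by rewrite esumZr ?mulr_ge0 ?mom_ge0// px1 mule1.
rewrite hA hB hC -!EFinD lee_fin; lra.
Qed.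


Definition Wf d mu x y (eps : R) := fine (W1 d (walk mu eps x) (walk mu eps y)).

Lemma W1_bounds d mu x y (eps : R) : is_distance d ->
  (forall (eps : R) z, 0 <= eps <= 1 -> is_prob (walk mu eps z)) ->
  finite_first_moment d x (mu x) -> finite_first_moment d y (mu y) ->
  0 <= eps <= 1 ->
  W1 d (walk mu eps x) (walk mu eps y) = (Wf d mu x y eps)%:E /\
  d x y - eps * (Mom d mu x + Mom d mu y) <= Wf d mu x y eps <=
  d x y + eps * (Mom d mu x + Mom d mu y).
Proof.
move=> dist hp fmx fmy he.
have [pi [hc hcost]] := upper dist hp fmx fmy he.
have hup : (W1 d (walk mu eps x) (walk mu eps y) <=
    (d x y + eps * (Mom d mu x + Mom d mu y))%:E)%E.
  apply: le_trans hcost; apply: ereal_inf_lbound; by exists pi.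
have hlow : ((d x y - eps * (Mom d mu x + Mom d mu y))%:E <=
    W1 d (walk mu eps x) (walk mu eps y))%E.
  by apply/ereal_infP => _ [pi' hc' <-]; exact: lower.
rewrite /Wf; move: hup hlow.
case: (W1 d (walk mu eps x) (walk mu eps y)) => [w||] //=.
by rewrite !lee_fin => -> ->.
Qed.


Lemma walk_affine mu z (s t : R) u : 0 < t ->
  walk mu s z u = s / t * walk mu t z u + (1 - s / t) * dirac_pt z u.
Proof.
move=> t0; rewrite /walk; field.
by rewrite lt0r_neq0.
Qed.

Lemma Wf_conv d mu x y (s t : R) : is_distance d ->
  (forall (eps : R) z, 0 <= eps <= 1 -> is_prob (walk mu eps z)) ->
  finite_first_moment d x (mu x) -> finite_first_moment d y (mu y) ->
  0 < s -> s <= t -> t <= 1 ->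
  Wf d mu x y s <= s / t * Wf d mu x y t + (1 - s / t) * d x y.
Proof.
move=> dist hp fmx fmy s0 st t1.
have [d0 _] := dist.
have t0 : 0 < t by apply: lt_le_trans st.
have hs : 0 <= s <= 1 by rewrite (ltW s0) (le_trans st t1).
have ht : 0 <= t <= 1 by rewrite (ltW t0) t1.
have l0 : 0 <= s / t by rewrite divr_ge0// ltW.
have l1 : s / t <= 1 by rewrite ler_pdivrMr// mul1r.
have l01 : 0 <= s / t <= 1 by rewrite l0 l1.
have [Wt _] := W1_bounds dist hp fmx fmy ht.
have [Ws _] := W1_bounds dist hp fmx fmy hs.
apply/ler_addgt0Pr => e e0.
have : (W1 d (walk mu t x) (walk mu t y) < (Wf d mu x y t + e)%:E)%E.
  by rewrite Wt lte_fin ltrDl.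
move=> /ereal_inf_lt [_ [pi hc <-] hlt].
have hmix := coupling_mix l01 hc (coupling_pt x y)
  (fun u => walk_affine mu x s u t0) (fun u => walk_affine mu y s u t0).
have : (W1 d (walk mu s x) (walk mu s y) <=
   cost d (fun w => (s / t * pi w + (1 - s / t) * pt_coupling x y w)%R))%E.
  by apply: ereal_inf_lbound; exists (fun w => (s / t * pi w + (1 - s / t) * pt_coupling x y w)%R).
have [pi0 _] := hc.
rewrite cost_mix//; last by move=> w; rewrite /pt_coupling; case: ifP.
rewrite cost_pt// Ws.
move: hlt; rewrite -/(cost d pi); have : (0 <= cost d pi)%E.
  by apply: esum_ge0 => w _; rewrite lee_fin mulr_ge0.
case: (cost d pi) => [c||] //.
rewrite lee_fin lte_fin -EFinM -EFinM -EFinD lee_fin => c0 hc1 hW.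
have h1 : s / t * c <= s / t * (Wf d mu x y t + e) by rewrite ler_wpM2l// ltW.
have h2 : s / t * e <= e by rewrite ler_piMl// ltW.
move: h1; rewrite mulrDr => h1.
lra.
Qed.

End Main.
Unset Implicit Arguments.

Theorem mainTheorem9 (R : realType) (V : choiceType)
  (E : V -> V -> Prop) (d : V -> V -> R) (mu : V -> V -> R) :
  locally_finite_graph E ->
  is_distance d -> complete_distance d ->
  (forall z, abs_summable (mu z)) ->
  (forall z, total_mass (mu z) = 0) ->
  (forall z, finite_first_moment d z (mu z)) ->
  (forall (eps : R) z, 0 <= eps <= 1 -> is_prob (walk mu eps z)) ->
  forall x y : V, x <> y ->
    cvg ((fun eps : R => (ORic_eps d mu eps x y / eps : R^o)) @ (0 : R)^'+).
Proof.
move=> _ dist _ _ _ fm hp x y xy.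
have [d0 [dE _]] := dist.
have D0 : 0 < d x y.
  rewrite lt0r d0 andbT; apply/eqP => /dE; exact: xy.
set K := Mom d mu x + Mom d mu y.
set F := fun eps : R => ORic_eps d mu eps x y / eps.
have FE : forall eps, 0 < eps ->
    F eps = (d x y - Wf d mu x y eps) * (d x y * eps)^-1.
  move=> eps e0; rewrite /F /ORic_eps -/(Wf d mu x y eps); field.
  by rewrite lt0r_neq0// lt0r_neq0.
apply/cvg_ex; eexists.
apply: (@nonincreasing_at_right_cvgr R F 0 (BRight 1)).
- by rewrite bnd_simp.
- move=> s t; rewrite !in_itv/= => /andP[s0 s1] /andP[t0 t1] st.
  have hc := Wf_conv dist hp (fm x) (fm y) s0 st t1.
  rewrite !FE//.
  have E1 : (d x y - Wf d mu x y t) * (d x y * t)^-1 =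
      (s * (d x y - Wf d mu x y t)) * (d x y * t * s)^-1.
    by field; rewrite !lt0r_neq0.
  have E2 : (d x y - Wf d mu x y s) * (d x y * s)^-1 =
      (t * (d x y - Wf d mu x y s)) * (d x y * t * s)^-1.
    by field; rewrite !lt0r_neq0.
  rewrite E1 E2; apply: ler_wpM2r; first by rewrite invr_ge0 !mulr_ge0// ltW.
  have E3 : t * (s / t * Wf d mu x y t + (1 - s / t) * d x y) =
      s * Wf d mu x y t + (t - s) * d x y.
    by field; rewrite lt0r_neq0.
  have := ler_wpM2l (ltW t0) hc; rewrite E3; lra.
- exists (K / d x y) => z [e]; rewrite /= in_itv/= => /andP[e0 e1] <-.
  have he : 0 <= e <= 1 by rewrite ltW.
  have [_ /andP[hl _]] := W1_bounds dist hp (fm x) (fm y) he.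
  rewrite FE//.
  have E1 : K / d x y = (e * K) * (d x y * e)^-1 by field; rewrite !lt0r_neq0.
  rewrite E1; apply: ler_wpM2r; first by rewrite invr_ge0 !mulr_ge0// ltW.
  rewrite -/K in hl; lra.
Qed.
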